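(* Let $n\ge3$ be odd and write $c_j=\cos(2\pi j/n)$. Then $$Su_2:=\frac32\sum_{j=0}^{\lfloor n/4\rfloor}\ \sum_{k=\lceil n/4\rceil}^{(n-1)/2}\frac{1}{|c_j-c_k+1|}\ \le\ \frac{3}{32}\,n^2.$$
   Context: No additional context beyond the notation $c_j=\cos(2\pi j/n)$. *)

(* Defs.v *)
From Stdlib Require Import Reals Lra Lia List.
Open Scope R_scope.

(* sum_{i=a}^{b} f i  (empty if b < a) *)
Definition sumR (a b : nat) (f : nat -> R) : R :=
  fold_right Rplus 0 (map f (List.seq a (S b - a))).

Definition cj (n j : nat) : R := cos (2 * PI * INR j / INR n).

Definition Su2 (n : nat) : R :=
  3 / 2 * sumR 0 (Nat.div n 4)
    (fun j => sumR (Nat.div (n + 3) 4) (Nat.div (n - 1) 2)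
       (fun k => 1 / Rabs (cj n j - cj n k + 1))).

(* Main.v *)
Require Import Defs.
From Stdlib Require Import Reals Lra Lia List.
Open Scope R_scope.

Lemma fold_bound (f : nat -> R) (c : R) : forall len s,
  (forall i, (s <= i < s + len)%nat -> f i <= c) ->
  fold_right Rplus 0 (map f (List.seq s len)) <= INR len * c.
Proof.
  induction len as [|len IH]; intros s H; cbn [List.seq map fold_right].
  - simpl; lra.
  - rewrite S_INR.
    assert (h1 : f s <= c) by (apply H; lia).
    assert (h2 := IH (S s) (fun i Hi => H i ltac:(lia))). lra.
Qed.

Lemma sumR_bound a b f c :
  (forall i, (a <= i <= b)%nat -> f i <= c) -> sumR a b f <= INR (S b - a) * c.
Proof. intros H; unfold sumR; apply fold_bound; intros i Hi; apply H; lia. Qed.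

Lemma sin_low x : 0 <= x -> x <= 2/3 -> 9/10 * x <= sin x.
Proof.
  intros h0 h1. assert (hp := PI2_3_2).
  destruct (SIN x h0 ltac:(lra)) as [H _].
  eapply Rle_trans; [|exact H].
  unfold sin_lb, sin_approx, sin_term; simpl sum_f_R0.
  simpl. 
  assert (0 <= x^2 <= 4/9) by (split; nra).
  assert (0 <= x^4 <= 1) by (split; nra).
  assert (0 <= x^6 <= 1) by (split; nra).
  simpl. nra.
Qed.

Lemma cos_j n j : (3 <= n)%nat -> (4 * j + 1 <= n)%nat ->
  sin (PI / (2 * INR n)) <= cj n j.
Proof.
  intros hn hj. unfold cj. assert (hp := PI2_3_2).
  apply le_INR in hj. rewrite plus_INR, mult_INR in hj. simpl INR in hj.
  assert (hj0 := pos_INR j). assert (hn3 : 3 <= INR n) by (apply le_INR in hn; simpl in hn; lra).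
  rewrite <- sin_shift.
  assert (e : PI/2 - 2 * PI * INR j / INR n = PI * (INR n - 4 * INR j) / (2 * INR n)) by (field; lra).
  rewrite e.
  assert (h1 : PI / (2 * INR n) <= PI * (INR n - 4 * INR j) / (2 * INR n)).
  { unfold Rdiv. apply Rmult_le_compat_r. left; apply Rinv_0_lt_compat; lra. nra. }
  assert (h2 : PI * (INR n - 4 * INR j) / (2 * INR n) <= PI/2).
  { apply Rmult_le_reg_r with (2 * INR n). lra. field_simplify; try lra. nra. }
  assert (h3 : 0 < PI / (2 * INR n)) by (apply Rdiv_lt_0_compat; lra).
  destruct (Req_dec (PI / (2 * INR n)) (PI * (INR n - 4 * INR j) / (2 * INR n))) as [E|E].
  - rewrite E; lra.
  - left; apply sin_increasing_1; lra.
Qed.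

Lemma cos_k n k : (3 <= n)%nat -> (n + 1 <= 4 * k)%nat -> (2 * k + 1 <= n)%nat ->
  cj n k <= - sin (PI / (2 * INR n)).
Proof.
  intros hn hk hk2. unfold cj. assert (hp := PI2_3_2).
  apply le_INR in hk. rewrite plus_INR, mult_INR in hk. simpl INR in hk.
  apply le_INR in hk2. rewrite plus_INR, mult_INR in hk2. simpl INR in hk2.
  assert (hn3 : 3 <= INR n) by (apply le_INR in hn; simpl in hn; lra).
  rewrite <- sin_shift.
  assert (e : PI/2 - 2 * PI * INR k / INR n = - (PI * (4 * INR k - INR n) / (2 * INR n))) by (field; lra).
  rewrite e, sin_neg.
  assert (h1 : PI / (2 * INR n) <= PI * (4 * INR k - INR n) / (2 * INR n)).
  { unfold Rdiv. apply Rmult_le_compat_r. left; apply Rinv_0_lt_compat; lra. nra. }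
  assert (h2 : PI * (4 * INR k - INR n) / (2 * INR n) <= PI/2).
  { apply Rmult_le_reg_r with (2 * INR n). lra. field_simplify; try lra. nra. }
  assert (h3 : 0 < PI / (2 * INR n)) by (apply Rdiv_lt_0_compat; lra).
  destruct (Req_dec (PI / (2 * INR n)) (PI * (4 * INR k - INR n) / (2 * INR n))) as [E|E].
  - rewrite E; lra.
  - assert (sin (PI / (2 * INR n)) < sin (PI * (4 * INR k - INR n) / (2 * INR n))) by (apply sin_increasing_1; lra). lra.
Qed.

Theorem mainTheorem5 (n : nat) (hn : (3 <= n)%nat) (hodd : Nat.Odd n) :
  Su2 n <= 3 / 32 * INR n ^ 2.
Proof.
  assert (hp := PI2_3_2). assert (hp4 := PI_4).
  assert (hn3 : 3 <= INR n) by (apply le_INR in hn; simpl in hn; lra).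
  set (s := sin (PI / (2 * INR n))).
  assert (hs : 5 / (4 * INR n) <= s).
  { unfold s. assert (h := sin_low (PI / (2 * INR n))).
    assert (0 <= PI / (2 * INR n)) by (left; apply Rdiv_lt_0_compat; lra).
    assert (PI / (2 * INR n) <= 2/3).
    { apply Rmult_le_reg_r with (2 * INR n). lra. field_simplify; lra. }
    specialize (h H H0).
    assert (5 / (4 * INR n) <= 9/10 * (PI / (2 * INR n))).
    { apply Rmult_le_reg_r with (4 * INR n). lra. field_simplify; lra. }
    lra. }
  set (t := 2 * INR n / (2 * INR n + 5)).
  assert (hterm : forall j k, (j <= Nat.div n 4)%nat ->
     (Nat.div (n + 3) 4 <= k <= Nat.div (n - 1) 2)%nat ->
     1 / Rabs (cj n j - cj n k + 1) <= t).
  { intros j k hj hk. destruct hodd as [p hp'].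
    pose proof (Nat.Div0.mul_div_le n 4). pose proof (Nat.Div0.mul_div_le (n-1) 2). pose proof (Nat.div_mod (n+3) 4 ltac:(lia)). pose proof (Nat.mod_upper_bound (n+3) 4 ltac:(lia)).
    assert (a1 := cos_j n j hn ltac:(lia)).
    assert (a2 := cos_k n k hn ltac:(lia) ltac:(lia)).
    fold s in a1, a2.
    assert (hd : (2 * INR n + 5) / (2 * INR n) <= cj n j - cj n k + 1).
    { assert ((2 * INR n + 5) / (2 * INR n) = 1 + 2 * (5 / (4 * INR n))) by (field; lra). lra. }
    assert (hpos : 0 < (2 * INR n + 5) / (2 * INR n)) by (apply Rdiv_lt_0_compat; lra).
    rewrite Rabs_right by lra.
    unfold t. replace (2 * INR n / (2 * INR n + 5)) with (1 / ((2 * INR n + 5) / (2 * INR n))) by (field; lra).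
    apply Rmult_le_compat_l; [lra|]. apply Rinv_le_contravar; lra. }
  assert (ht0 : 0 <= t) by (unfold t; left; apply Rdiv_lt_0_compat; lra).
  unfold Su2.
  set (K := (S (Nat.div (n - 1) 2) - Nat.div (n + 3) 4)%nat).
  assert (hin : forall j, (0 <= j <= Nat.div n 4)%nat ->
     sumR (Nat.div (n + 3) 4) (Nat.div (n - 1) 2)
       (fun k => 1 / Rabs (cj n j - cj n k + 1)) <= INR K * t).
  { intros j hj. apply sumR_bound. intros k hk. apply hterm; lia. }
  assert (hout := sumR_bound _ _ _ _ hin).
  set (J := (S (Nat.div n 4) - 0)%nat) in hout.
  assert (hnat : (32 * (J * K) <= n * (2 * n + 5))%nat).
  { destruct hodd as [p hp']. unfold J, K.
    pose proof (Nat.div_mod n 4 ltac:(lia)). pose proof (Nat.mod_upper_bound n 4 ltac:(lia)).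
    pose proof (Nat.div_mod (n-1) 2 ltac:(lia)). pose proof (Nat.mod_upper_bound (n-1) 2 ltac:(lia)).
    pose proof (Nat.div_mod (n+3) 4 ltac:(lia)). pose proof (Nat.mod_upper_bound (n+3) 4 ltac:(lia)).
    destruct (Nat.Even_or_Odd p) as [[m hm]|[m hm]].
    - assert (E1 : Nat.div n 4 = m) by lia. assert (E2 : Nat.div (n-1) 2 = (2*m)%nat) by lia.
      assert (E3 : Nat.div (n+3) 4 = S m) by lia.
      rewrite E1, E2, E3. subst n p. clear -hn. nia.
    - assert (E1 : Nat.div n 4 = m) by lia. assert (E2 : Nat.div (n-1) 2 = (2*m+1)%nat) by lia.
      assert (E3 : Nat.div (n+3) 4 = S m) by lia.
      rewrite E1, E2, E3. subst n p. clear -hn. nia. }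
  apply le_INR in hnat. rewrite !mult_INR, plus_INR, mult_INR in hnat.
  assert (e32 : INR 32 = 32) by (simpl; lra). assert (e2 : INR 2 = 2) by (simpl; lra). assert (e5 : INR 5 = 5) by (simpl; lra).
  rewrite e32, e2, e5 in hnat.
  assert (0 <= INR J) by apply pos_INR. assert (0 <= INR K) by apply pos_INR.
  assert (INR J * (INR K * t) <= 3/32 * INR n ^ 2 * (2/3)).
  { unfold t. apply Rmult_le_reg_r with (2 * INR n + 5). lra.
    field_simplify; try lra. nra. }
  lra.
Qed.
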